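(* The set of ramification points of the map $X:\mathbb P^1\to\mathbb P^1$, $X(z)=z/(\gamma G(S(z)))$, is the set $\mathcal L$ of zeros of $\phi$ if $LM=2$, and is $\mathcal L\cup\{\infty\}$ if $LM>2$.
   Context: Let $G(z)=1+\sum_{k=1}^Mg_kz^k$ with complex coefficients, $g_M\neq0$, let $S(z)=\sum_{k=1}^Lks_kz^k$ with complex $s_k$, $s_L\ne0$, $LM>1$, and $\gamma\in\mathbb C\setminus\{0\}$. Let $\phi(z)=G(S(z))-zG'(S(z))S'(z)$, a polynomial of degree $LM$, and $\mathcal L$ its zero set. A point $z_0\in\mathbb P^1$ is a ramification point of $X$ if $X$ is not invertible in any neighbourhood of $z_0$, i.e. either $X-X(z_0)$ vanishes to order $>1$ at $z_0$, or $X$ has a pole of order $\ge2$ at $z_0$. *)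

(* Defs.v *)
From HB Require Import structures.
From mathcomp Require Import all_boot all_order all_algebra.
From mathcomp Require Import complex.
From mathcomp Require Import reals.
Set Implicit Arguments. Unset Strict Implicit. Unset Printing Implicit Defensive.
Import Order.TTheory GRing.Theory Num.Theory.
Local Open Scope ring_scope.

(* Points of P^1 over a field F: [Some z] is the finite point z, [None] is oo. *)
Definition P1 (F : Type) := option F.

(* Order of vanishing of the rational function p/q at a point of P^1
   (for p, q nonzero): at a finite z it is mult_z(p) - mult_z(q); at oo it is
   deg q - deg p.  Negative values mean a pole of that order. *)
Definition ord_at (F : fieldType) (a : P1 F) (p q : {poly F}) : int :=
  match a with
  | Some z => (mup z p)%:Z - (mup z q)%:Z
  | None => (size q)%:Z - (size p)%:Z
  end.

(* [a] is a ramification point of the rational map X = p/q (q <> 0):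
   either X - X(a) vanishes to order > 1 at a (X(a) being the finite value c
   with X - c = (p - c q)/q vanishing at a; X - c identically 0 counts as
   vanishing to infinite order), or X has a pole of order >= 2 at a. *)
Definition ramification_point (F : fieldType) (p q : {poly F}) (a : P1 F) : Prop :=
  (exists c : F, p - c *: q = 0 \/ 1 < ord_at a (p - c *: q) q)
  \/ (p != 0 /\ ord_at a p q <= -2).

(* Main.v *)
Require Import Defs.
From HB Require Import structures.
From mathcomp Require Import all_boot all_order all_algebra.
From mathcomp Require Import complex.
From mathcomp Require Import reals.
From mathcomp Require Import zify ring.
Import Order.TTheory GRing.Theory Num.Theory.
Local Open Scope ring_scope.

Section Core.
Variable F : fieldType.

Lemma mup2 (f : {poly F}) z : f != 0 ->
  (1 < mup z f)%N <-> (root f z /\ root f^`() z).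
Proof.
move=> f0.
have [m [r]] := multiplicity_XsubC f z; rewrite f0 /= => rz fE.
have -> : mup z f = m by rewrite fE mupMr // mup_XsubCX eqxx.
case: m fE => [|[|m]] fE.
- rewrite fE expr0 mulr1; split => // [[h _]]; by rewrite h in rz.
- split => // [[_ h]]; move: h; rewrite fE expr1 derivM derivXsubC mulr1.
  by rewrite rootE !hornerE subrr mulr0 ?addr0 ?add0r => h; rewrite /root h in rz.
- split => // _.
  have -> : f = ('X - z%:P) * (('X - z%:P) * (r * ('X - z%:P)^+m)).
    by rewrite fE !exprS mulrCA (mulrCA r).
  rewrite derivM derivM derivXsubC /root !(hornerXsubC, hornerM, hornerD) subrr.
  by rewrite !(mul0r, mulr0, add0r, addr0) eqxx.
Qed.
Lemma int1 (a b : nat) : 1 < a%:Z - b%:Z -> (1 < a)%N. Proof. lia. Qed.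
Lemma int2 (a b : nat) : a%:Z - b%:Z <= -2 -> (1 < b)%N. Proof. lia. Qed.
Lemma int3 (b : nat) : (1 < b)%N -> 0%:Z - b%:Z <= -2. Proof. lia. Qed.
Lemma int4 (a : nat) : (1 < a)%N -> 1 < a%:Z - 0%:Z. Proof. lia. Qed.
Lemma fnz (q : {poly F}) N c : size q = N.+1 -> (1 < N)%N -> 'X - c *: q != 0.
Proof.
move=> sq hN; have [->|c0] := eqVneq c 0; first by rewrite scale0r subr0 polyX_eq0.
rewrite -size_poly_eq0 addrC size_polyDl size_polyN size_scale // ?sq // size_polyX.
lia.
Qed.

Lemma core_fin (q phi : {poly F}) (gamma : F) N : gamma != 0 ->
  gamma *: phi = q - 'X * q^`() -> q.[0] != 0 -> size q = N.+1 -> (1 < N)%N ->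
  forall z, ramification_point 'X q (Some z) <-> root phi z.
Proof.
move=> g0 hphi q0 sq hN z.
have hE : gamma * phi.[z] = q.[z] - z * q^`().[z].
  by rewrite -hornerZ hphi hornerD hornerN hornerM hornerX.
have q0' : q != 0 by apply: contraNneq q0 => ->; rewrite horner0.
have hroot : q.[z] - z * q^`().[z] = 0 -> root phi z.
  by move=> h; rewrite /root; move: h; rewrite -hE => /eqP; rewrite mulf_eq0 (negPf g0).
split.
- case => [[c [/eqP f0 | hord]] | [_ hord]].
  + by rewrite (negPf (fnz _ _ c sq hN)) in f0.
  + move: hord; rewrite /ord_at => hord.
    have /mup2 := int1 _ _ hord.
    case/(_ (fnz _ _ c sq hN)); rewrite derivB derivX derivZ /root.
    rewrite !(hornerD, hornerN, hornerZ, hornerX, hornerC) => /eqP h1 /eqP h2.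
    apply: hroot.
    have -> : q.[z] - z * q^`().[z] = q.[z] * (1 - c * q^`().[z]) - q^`().[z] * (z - c * q.[z]) by ring.
    by rewrite h1 h2 !mulr0 subr0.
  + move: hord; rewrite /ord_at => hord.
    have /mup2 := int2 _ _ hord.
    case/(_ q0') => /eqP r1 /eqP r2; apply: hroot.
    by rewrite r1 r2 mulr0 subr0.
- move=> rz; have hz := hE; rewrite (eqP rz) mulr0 in hz.
  have [rq|nrq] := boolP (root q z).
  + have z0 : z != 0 by apply: contraNneq q0 => zE; move: rq; rewrite zE.
    have rq' : root q^`() z.
      move: hz; rewrite (eqP rq) sub0r => /eqP; rewrite eq_sym oppr_eq0 mulf_eq0 (negPf z0) /=.
      done.
    have /mup2 := conj rq rq'; move/(_ q0') => hm.
    right; split; first by rewrite polyX_eq0.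
    rewrite /ord_at mupNroot; last by rewrite rootE hornerX.
    exact: int3.
  + left; exists (z / q.[z]); right; rewrite /ord_at (mupNroot nrq).
    apply: int4.
    apply/mup2; first exact: fnz _ _ _ sq hN.
    rewrite derivB derivX derivZ /root !(hornerD, hornerN, hornerZ, hornerX, hornerC).
    have qz0 : q.[z] != 0 by [].
    split; first by rewrite divfK // subrr.
    rewrite mulrAC.
    have -> : z * q^`().[z] = q.[z] by apply/eqP; rewrite eq_sym -subr_eq0 -hz.
    by rewrite divff // subrr.
Qed.
Lemma core_inf (q : {poly F}) N : size q = N.+1 -> (1 < N)%N ->
  ramification_point 'X q None <-> (2 < N)%N.
Proof.
move=> sq hN; split.
- case => [[c [/eqP f0 | hord]] | [_ hord]].
  + by rewrite (negPf (fnz _ _ c sq hN)) in f0.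
  + move: hord; rewrite /ord_at sq; have [->|c0] := eqVneq c 0.
      by rewrite scale0r subr0 size_polyX => h; lia.
    have -> : size ('X - c *: q) = N.+1.
      by rewrite [_ - c *: q]addrC size_polyDl size_polyN size_scale // sq size_polyX.
    by rewrite subrr.
  + by move: hord; rewrite /ord_at sq size_polyX => h; lia.
- move=> h; left; exists 0; right; rewrite /ord_at scale0r subr0 sq size_polyX.
  lia.
Qed.
End Core.
Lemma coef_sumX (K : nzRingType) (a : nat -> K) N n :
  (\sum_(1 <= k < N.+1) a k *: 'X^k)`_n = if (0 < n <= N)%N then a n else 0.
Proof.
elim: N => [|N IH]; first by rewrite big_geq // coef0; case: n => [|[|n]].
rewrite big_nat_recr //= coefD IH coefZ coefXn.
have [->|nN] := eqVneq n N.+1.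
  by rewrite mulr1 ltnn andbF leqnn add0r.
by rewrite mulr0 addr0 [(n <= N.+1)%N]leq_eqVlt (negPf nN) ltnS.
Qed.

Lemma size_sumX (K : nzRingType) (a : nat -> K) N : a N != 0 -> (0 < N)%N ->
  size (\sum_(1 <= k < N.+1) a k *: 'X^k) = N.+1.
Proof.
move=> aN hN; apply/eqP; rewrite eqn_leq; apply/andP; split.
  apply/leq_sizeP => j hj; rewrite coef_sumX; case: ifP => // /andP [_ h]; lia.
rewrite ltnNge; apply/negP => h; have := nth_default 0 h.
by rewrite coef_sumX hN leqnn /= => h'; rewrite h' eqxx in aN.
Qed.

Lemma test (R : realType) (L : nat) : (0 < L)%N -> (L%:R : R[i]) != 0.
Proof. move=> h; rewrite pnatr_eq0; lia. Qed.

Theorem lemma7p7 (R : realType) (M L : nat) (g s : nat -> R[i]) (gamma : R[i])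
  (hgM : g M != 0) (hsL : s L != 0) (hLM : (1 < L * M)%N) (hgamma : gamma != 0) :
  let G : {poly R[i]} := 1 + \sum_(1 <= k < M.+1) g k *: 'X^k in
  let S : {poly R[i]} := \sum_(1 <= k < L.+1) (k%:R * s k) *: 'X^k in
  let phi : {poly R[i]} := G \Po S - 'X * ((G^`()) \Po S) * S^`() in
  (* X(z) = z / (gamma G(S(z))) as the rational function p/q *)
  let p : {poly R[i]} := 'X in
  let q : {poly R[i]} := gamma *: (G \Po S) in
  ((L * M)%N = 2%N ->
     forall a : P1 R[i], ramification_point p q a <->
       exists2 z : R[i], a = Some z & root phi z) /\
  ((2 < L * M)%N ->
     forall a : P1 R[i], ramification_point p q a <->
       a = None \/ exists2 z : R[i], a = Some z & root phi z).
Proof.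
move=> G S phi p q.
have M0 : (0 < M)%N by rewrite lt0n; apply/eqP => M0; rewrite M0 muln0 in hLM.
have L0 : (0 < L)%N by rewrite lt0n; apply/eqP => L0; rewrite L0 mul0n in hLM.
have sG : size G = M.+1.
  by rewrite /G addrC size_polyDl size_sumX // size_poly1.
have sS : size S = L.+1.
  by rewrite /S size_sumX // mulf_neq0 // test.
have GS0 : G \Po S != 0.
  by rewrite comp_poly_eq0 ?sS // -size_poly_eq0 sG.
have sq : size q = (L * M).+1.
  rewrite /q size_scale //.
  have := size_comp_poly G S; rewrite sG sS /= => h.
  by rewrite mulnC -h prednK // lt0n size_poly_eq0.
have q0 : q.[0] != 0.
  rewrite /q hornerZ horner_comp mulf_neq0 //.
  have -> : S.[0] = 0 by rewrite horner_coef0 /S coef_sumX.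
  by rewrite horner_coef0 /G coefD coef1 coef_sumX addr0 oner_neq0.
have hphi : gamma *: phi = q - 'X * q^`().
  by rewrite /phi /q derivZ deriv_comp scalerBr -scalerAr mulrA.
have fin := @core_fin _ q phi gamma _ hgamma hphi q0 sq hLM.
have inf := @core_inf _ q _ sq hLM.
split => hLM' [z|].
- rewrite /p fin; split => [h|[z' [<-] //]]; by exists z.
- rewrite /p inf hLM'; split => // [[z]] //.
- rewrite /p fin; split => [h|[//|[z' [<-] //]]]; right; by exists z.
- rewrite /p inf; split => _ //; by left.
Qed.
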